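(* Let $K\ge 1$ and $T\ge 2$ be integers and let $a_1,\dots,a_{T-1}$ be binary sequences of period $K$. Define $s=I(0_K,a_1,\dots,a_{T-1})$ and $s'=I(1_K,a_1,\dots,a_{T-1})$, binary sequences of period $KT$. Let $0\le\tau<KT$ with $\tau=\tau_1T+\tau_2$, where $1\le\tau_2\le T-1$. Then $$R_{s',s}(\tau)=R_{s,s'}(\tau)\iff d(a_{T-\tau_2})=d(a_{\tau_2}),$$ and $$R_s(\tau)=R_{s'}(\tau)\iff d(a_{T-\tau_2})=-d(a_{\tau_2}).$$
   Context: A binary sequence of period $n$ is a map $\mathbb{Z}\to\{0,1\}$ with period $n$. For binary sequences $a,b$ of period $n$, $R_{a,b}(\tau)=\sum_{t=0}^{n-1}(-1)^{a(t)+b(t+\tau)}$ (indices mod $n$), and $R_a=R_{a,a}$. For binary sequences $b_0,\dots,b_{T-1}$ of period $K$, $I(b_0,\dots,b_{T-1})$ is the binary sequence $v$ of period $KT$ with $v(iT+j)=b_j(i)$ for $0\le i\le K-1$, $0\le j\le T-1$. $0_K$, $1_K$ are the all-zero and all-one sequences of period $K$. For a binary sequence $a$ of period $K$, $d(a)=2|\{0\le t\le K-1:a(t)=1\}|-K$. *)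

(* Defs.v *)
From mathcomp Require Import all_boot all_order all_algebra.
Set Implicit Arguments. Unset Strict Implicit. Unset Printing Implicit Defensive.
Import Order.TTheory GRing.Theory Num.Theory.
Local Open Scope ring_scope.

(* A binary sequence of period n is modelled as a function a : nat -> bool,
   read modulo n: its value at the integer t is a (t mod n).  Only the
   values a 0, ..., a (n-1) matter. *)

Definition corr (n : nat) (a b : nat -> bool) (tau : nat) : int :=
  \sum_(t < n) (if a (t %% n)%N == b ((t + tau) %% n)%N then 1 else -1).

Definition acorr (n : nat) (a : nat -> bool) (tau : nat) : int := corr n a a tau.

Definition dbal (K : nat) (a : nat -> bool) : int :=
  2 * (#|[set t : 'I_K | a t]|)%:Z - K%:Z.

Definition interleave (K T : nat) (b : nat -> nat -> bool) : nat -> bool :=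
  fun t => let u := (t %% (K * T))%N in b (u %% T)%N ((u %/ T) %% K)%N.

Definition fam (c : bool) (a : nat -> nat -> bool) : nat -> nat -> bool :=
  fun j => if j == 0%N then (fun _ => c) else a j.

(* Main.v *)
Require Import Defs.
From mathcomp Require Import all_boot all_order all_algebra.
From mathcomp Require Import zify.
Set Implicit Arguments. Unset Strict Implicit. Unset Printing Implicit Defensive.
Import Order.TTheory GRing.Theory Num.Theory.
Local Open Scope ring_scope.

Definition E (b c : bool) : int := if b == c then 1 else -1.
Definition F (b : bool) : int := if b then 1 else -1.

Lemma keyc (d0 d1 p q : bool) : ~~ (d0 && d1) -> (d0 -> p = false) -> (d1 -> q = false) ->
  E (if d0 then true else p) q - E p (if d1 then true else q) =
  2 * ((if d0 then F q else 0) - (if d1 then F p else 0)).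
Proof.
case: d0 d1 => [] [] //= _ H1 H2; rewrite ?(H1 isT) ?(H2 isT);
  by case: p q {H1 H2} => [] []; rewrite /E /F /=.
Qed.

Lemma keya (d0 d1 p q : bool) : ~~ (d0 && d1) -> (d0 -> p = false) -> (d1 -> q = false) ->
  E p q - E (if d0 then true else p) (if d1 then true else q) =
  - 2 * ((if d0 then F q else 0) + (if d1 then F p else 0)).
Proof.
case: d0 d1 => [] [] //= _ H1 H2; rewrite ?(H1 isT) ?(H2 isT);
  by case: p q {H1 H2} => [] []; rewrite /E /F /=.
Qed.

Lemma modcond T t2 j : (1 <= t2)%N -> (t2 <= T - 1)%N -> (j < T)%N ->
  ((j + t2) %% T == 0)%N = (j == T - t2)%N.
Proof.
move=> h1 h2 hj; apply/eqP/eqP => [|->].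
  case: (ltnP (j + t2) T) => h.
    by rewrite modn_small //; lia.
  have -> : (j + t2 = (j + t2 - T) + T)%N by lia.
  rewrite modnDr modn_small; lia.
have -> : (T - t2 + t2 = T)%N by lia.
by rewrite modnn.
Qed.
Lemma sum_split (g : nat -> int) K T :
  \sum_(t < K * T) g t = \sum_(i < K) \sum_(j < T) g (i * T + j)%N.
Proof.
elim: K => [|K IH]; first by rewrite mul0n !big_ord0.
rewrite mulSnr big_split_ord /= IH big_ord_recr /=.
by congr (_ + _).
Qed.
Lemma dbal_sum K b : dbal K b = \sum_(k < K) F (b k).
Proof.
rewrite /dbal cardsE -sum1_card big_mkcond /=.
rewrite (eq_bigr (fun k : 'I_K => 2 * ((b k : nat)%:Z) - 1)); last first.
  by move=> k _; rewrite /F; case: (b k).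
rewrite sumrB sumr_const card_ord -mulr_sumr.
congr (2 * _ - _); last by rewrite natz.
rewrite (big_morph Posz PoszD (erefl _)).
by apply: eq_bigr => k _; rewrite unfold_in; case: (b k).
Qed.
Lemma sum_rot (g : nat -> int) K c : (0 < K)%N ->
  \sum_(i < K) g ((i + c) %% K)%N = \sum_(k < K) g k.
Proof.
move=> K0.
pose h (i : 'I_K) : 'I_K := Ordinal (ltn_pmod (i + c) K0).
rewrite [RHS](reindex_inj (h := h)) /=; last first.
  move=> i j /(congr1 val) /= /eqP.
  rewrite eqn_modDr !modn_small // => /eqP ij; exact: val_inj.
by [].
Qed.

Lemma fam_split K T (a : nat -> nat -> bool) c x : (0 < K)%N ->
  interleave K T (fam c a) x =
  if (x %% T == 0)%N then c else interleave K T (fam false a) x.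
Proof.
move=> K0; rewrite /interleave /fam.
have -> : ((x %% (K * T)) %% T = x %% T)%N by rewrite -(modn_dvdm x (dvdn_mull K (dvdnn T))).
by case: ifP.
Qed.

Lemma modT K T t : ((t %% (K * T)) %% T = t %% T)%N.
Proof. by rewrite modn_dvdm // dvdn_mull. Qed.

Lemma s_gen K T (a : nat -> nat -> bool) q j : (0 < K)%N -> (j < T)%N -> j != 0%N ->
  interleave K T (fam false a) (q * T + j)%N = a j (q %% K)%N.
Proof.
move=> K0 jT j0; have T0 : (0 < T)%N by apply: leq_ltn_trans jT.
rewrite /interleave /fam.
rewrite modT modnMDl modn_small // (negbTE j0).
rewrite divn_modl ?dvdn_mull // mulnK // modn_mod.
by rewrite divnMDl // divn_small // addn0.
Qed.

Lemma sK K T b y : interleave K T b (y %% (K * T))%N = interleave K T b y.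
Proof. by rewrite /interleave modn_mod. Qed.


Lemma lt_idx K T i j : (i < K)%N -> (j < T)%N -> (i * T + j < K * T)%N.
Proof.
move=> iK jT.
have : (i.+1 * T <= K * T)%N by rewrite leq_mul2r iK orbT.
rewrite mulSn; lia.
Qed.

Theorem corollary1 (K T : nat) (a : nat -> nat -> bool)
  (tau tau1 tau2 : nat) :
  (1 <= K)%N -> (2 <= T)%N ->
  (tau < K * T)%N -> tau = (tau1 * T + tau2)%N ->
  (1 <= tau2)%N -> (tau2 <= T - 1)%N ->
  let s := interleave K T (fam false a) in
  let s' := interleave K T (fam true a) in
  (corr (K * T) s' s tau = corr (K * T) s s' tau <->
     dbal K (a (T - tau2)%N) = dbal K (a tau2)) /\
  (acorr (K * T) s tau = acorr (K * T) s' tau <->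
     dbal K (a (T - tau2)%N) = - dbal K (a tau2)).
Proof.
move=> K0 T2 tauN htau t21 t2T s s'.
have T0 : (0 < T)%N by apply: leq_trans T2.
have t2lt : (tau2 < T)%N by lia.
have t2n0 : tau2 != 0%N by lia.
pose N := (K * T)%N.
pose g0 := fun t : nat => if ((t %% N) %% T == 0)%N then F (s ((t + tau) %% N)%N) else 0.
pose g1 := fun t : nat => if (((t + tau) %% N) %% T == 0)%N then F (s (t %% N)%N) else 0.
pose A := \sum_(t < N) g0 t.
pose B := \sum_(t < N) g1 t.
have tauT t : ((t + tau) %% T = (t %% T + tau2) %% T)%N.
  by rewrite htau addnCA modnMDl modnDml.
have dis t : ~~ ((((t %% N) %% T) == 0)%N && ((((t + tau) %% N) %% T) == 0)%N).
  rewrite !modT tauT; apply/negP => /andP [/eqP -> ].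
  by rewrite add0n modn_small // (negbTE t2n0).
have h0 x : ((x %% T) == 0)%N -> s x = false.
  by move=> H; rewrite /s /interleave modT (eqP H).
have s'E x : s' x = if (x %% T == 0)%N then true else s x by rewrite /s' fam_split.
have DA : A = dbal K (a tau2).
  rewrite /A /N (sum_split g0) dbal_sum -(sum_rot (fun k => F (a tau2 k)) tau1 K0).
  apply: eq_bigr => i _.
  rewrite (bigD1 (Ordinal T0)) //= big1 ?addr0; last first.
    move=> j /= hj; rewrite /g0 /N modT modnMDl modn_small //.
    by case: ifP => // /eqP j0; case/eqP: hj; apply: val_inj.
  rewrite /g0 /N addn0 modT modnMl eqxx /s sK htau addnA -mulnDl.
  by rewrite s_gen.
have DB : B = dbal K (a (T - tau2)%N).
  rewrite /B /N (sum_split g1) dbal_sum.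
  apply: eq_bigr => i _.
  have jlt : (T - tau2 < T)%N by lia.
  rewrite (bigD1 (Ordinal jlt)) //= big1 ?addr0; last first.
    move=> j /= hj; rewrite /g1 /N modT tauT modnMDl (modn_small (ltn_ord j)) modcond //.
    by case: ifP => // /eqP j0; case/eqP: hj; apply: val_inj.
  rewrite /g1 /N modT tauT modnMDl (modn_small jlt) modcond // eqxx.
  rewrite modn_small ?lt_idx // /s s_gen //; last by lia.
  by rewrite modn_small.
have Dc : corr (K * T) s' s tau - corr (K * T) s s' tau = 2 * (A - B).
  rewrite /corr -sumrB /A /B -sumrB mulr_sumr; apply: eq_bigr => t _.
  rewrite !s'E; apply: (keyc (dis t) (h0 _) (h0 _)).
have Da : acorr (K * T) s tau - acorr (K * T) s' tau = - 2 * (A + B).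
  rewrite /acorr /corr -sumrB /A /B -big_split mulr_sumr; apply: eq_bigr => t _.
  rewrite !s'E; apply: (keya (dis t) (h0 _) (h0 _)).
rewrite DA DB in Dc Da.
split; lia.
Qed.
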